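(* Let $\{\mathbf{W}(t)\}_{t \geq 0}$ be i.i.d. random $n \times n$ row-stochastic matrices with mean $\overline{\mathbf{W}} = \mathbb{E}\{\mathbf{W}(t)\}$, each of the block form $$\mathbf{W}(t) = \begin{pmatrix} \mathbf{I}_{n_s} & \mathbf{0} \\ \mathbf{B}(t) & \mathbf{D}(t) \end{pmatrix},$$ with $1 \le n_s < n$, and correspondingly $\overline{\mathbf{W}} = \begin{pmatrix} \mathbf{I}_{n_s} & \mathbf{0} \\ \overline{\mathbf{B}} & \overline{\mathbf{D}} \end{pmatrix}$. Assume $\|\overline{\mathbf{D}}\|_2 < 1$ and $\mathbb{E}\{\|\mathbf{D}(t)\|_2\} = \|\overline{\mathbf{D}}\|_2$. For $t \geq s$ let $\boldsymbol{\Phi}(s,t) = \mathbf{W}(t)\mathbf{W}(t-1)\cdots\mathbf{W}(s)$. Then $\mathbf{D}(t)\mathbf{D}(t-1)\cdots\mathbf{D}(s) \to \mathbf{0}$ almost surely as $t - s \to \infty$, so that $\boldsymbol{\Phi}(s,t)$ converges almost surely to $$\begin{pmatrix} \mathbf{I} & \mathbf{0} \\ \mathbf{B}(s,t) & \mathbf{0} \end{pmatrix} \quad\text{as } |t-s|\to\infty$$ (in the sense that the difference tends to zero), where $\mathbf{B}(s,t) = \sum_{q=s}^{t} \big(\mathbf{D}(t)\cdots\mathbf{D}(q+1)\big)\mathbf{B}(q)$ (the empty product for $q=t$ being the identity) is bounded almost surely.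
   Context: This models opinion dynamics $\mathbf{x}(t+1) = \mathbf{W}(t)\mathbf{x}(t)$ in which the first $n_s$ agents are stubborn (never change opinion). $\|\cdot\|_2$ is the spectral norm. *)

(* Defs.v *)
From HB Require Import structures.
From mathcomp Require Import all_boot all_order all_algebra.
From mathcomp Require Import all_classical all_reals all_analysis.
Set Implicit Arguments. Unset Strict Implicit. Unset Printing Implicit Defensive.
Import Order.TTheory GRing.Theory Num.Theory.
Local Open Scope classical_set_scope.
Local Open Scope ring_scope.

Definition vnorm2 {R : realType} {q : nat} (x : 'cV[R]_q) : R :=
  Num.sqrt (\sum_(i < q) (x i 0) ^+ 2).

Definition specnorm {R : realType} {p q : nat} (A : 'M[R]_(p, q)) : R :=
  sup [set vnorm2 (A *m x) | x in [set x : 'cV[R]_q | vnorm2 x <= 1]].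

Fixpoint lprod {R : ringType} {m : nat} (F : nat -> 'M[R]_m) (s k : nat) : 'M[R]_m :=
  match k with
  | 0 => F s
  | k'.+1 => F (s + k'.+1)%N *m lprod F s k'
  end.

Definition prod_between {R : ringType} {m : nat} (F : nat -> 'M[R]_m) (a b : nat)
  : 'M[R]_m := if (b < a)%N then 1%:M else lprod F a (b - a).

Definition mx_event {T : Type} {R : realType} {p q : nat}
  (X : T -> 'M[R]_(p, q)) (A : 'I_p -> 'I_q -> set R) : set T :=
  [set w | forall i j, A i j (X w i j)].

(* The random matrices W t (t : nat) are i.i.d.: entries are measurable
   (Borel) random variables; the family is mutually independent (product rule
   over every finite set of distinct times, for the generating pi-system of
   "rectangle" events of each matrix); and all W t have the law of W 0. *)
Definition iid_mx {d} {T : measurableType d} {R : realType} {p q : nat}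
  (P : probability T R) (W : nat -> T -> 'M[R]_(p, q)) : Prop :=
  [/\ (forall t i j, measurable_fun setT (fun w => W t w i j)),
      (forall (S : seq nat) (A : nat -> 'I_p -> 'I_q -> set R),
          uniq S -> (forall t i j, measurable (A t i j)) ->
          P [set w | forall t, t \in S -> mx_event (W t) (A t) w]
          = \big[*%E/1%E]_(t <- S) P (mx_event (W t) (A t)))
    & (forall t (A : 'I_p -> 'I_q -> set R), (forall i j, measurable (A i j)) ->
          P (mx_event (W t) A) = P (mx_event (W 0%N) A))].

Definition row_stochastic {R : realType} {n : nat} (M : 'M[R]_n) : Prop :=
  (forall i j, 0 <= M i j) /\ (forall i, \sum_j M i j = 1).

(* Main.v *)
Require Import Defs.
From HB Require Import structures.
From mathcomp Require Import all_boot all_order all_algebra.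
From mathcomp Require Import all_classical all_reals all_analysis.
From mathcomp Require Import lra ring zify.
Import Order.TTheory GRing.Theory Num.Theory.
Import numFieldNormedType.Exports.
Local Open Scope classical_set_scope.
Local Open Scope ring_scope.
Set Implicit Arguments. Unset Strict Implicit.
Section Norms.
Variable R : realType.

Lemma sumsq_ge0 q (x : 'cV[R]_q) : 0 <= \sum_(i < q) x i 0 ^+ 2.
Proof. by apply: sumr_ge0 => i _; exact: sqr_ge0. Qed.

Lemma vnorm2_ge0 q (x : 'cV[R]_q) : 0 <= vnorm2 x.
Proof. exact: sqrtr_ge0. Qed.

Lemma vnorm2_sq q (x : 'cV[R]_q) : vnorm2 x ^+ 2 = \sum_(i < q) x i 0 ^+ 2.
Proof. by rewrite /vnorm2 sqr_sqrtr // sumsq_ge0. Qed.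

Lemma entry_le_vnorm2 q (x : 'cV[R]_q) i : `|x i 0| <= vnorm2 x.
Proof.
rewrite -sqrtr_sqr /vnorm2 ler_sqrt ?sumsq_ge0 // (bigD1 i) //=.
by rewrite lerDl; apply: sumr_ge0 => j _; exact: sqr_ge0.
Qed.

Lemma vnorm2_le_sum q (x : 'cV[R]_q) : vnorm2 x <= \sum_i `|x i 0|.
Proof.
have h0 : 0 <= \sum_i `|x i 0| by apply: sumr_ge0 => i _.
rewrite -(ger0_norm h0) -sqrtr_sqr /vnorm2 ler_sqrt ?sqr_ge0 //.
rewrite expr2 mulr_suml; apply: ler_sum => i _.
rewrite mulr_sumr (bigD1 i) //= -expr2 real_normK ?num_real //.
rewrite lerDl; apply: sumr_ge0 => j _; exact: mulr_ge0.
Qed.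

Lemma cauchy_schwarz q (x y : 'cV[R]_q) :
  \sum_i x i 0 * y i 0 <= vnorm2 x * vnorm2 y.
Proof.
set a := \sum_i x i 0 ^+ 2; set b := \sum_i y i 0 ^+ 2; set c := \sum_i x i 0 * y i 0.
have a0 : 0 <= a by exact: sumsq_ge0.
have b0 : 0 <= b by exact: sumsq_ge0.
have key : forall t, 0 <= a - 2 * t * c + t ^+ 2 * b.
  move=> t; have -> : a - 2 * t * c + t ^+ 2 * b = \sum_i (x i 0 - t * y i 0) ^+ 2.
    rewrite /a /b /c !mulr_sumr -sumrB -big_split /=.
    by apply: eq_bigr => i _; ring.
  by apply: sumr_ge0 => i _; exact: sqr_ge0.
have cab : c ^+ 2 <= a * b.
  have [b00|bpos] := eqVneq b 0.
    have y0 : forall i, y i 0 = 0.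
      move=> i; apply/eqP; rewrite -sqrf_eq0; apply/eqP.
      by apply: (psumr_eq0P _ b00) => // j _; exact: sqr_ge0.
    have -> : c = 0 by rewrite /c big1 // => i _; rewrite y0 mulr0.
    by rewrite b00 mulr0 expr2 mulr0.
  have bp : 0 < b by rewrite lt_def bpos b0.
  have := key (c / b).
  have -> : a - 2 * (c / b) * c + (c / b) ^+ 2 * b = (a * b - c ^+ 2) / b.
    by field.
  by rewrite pmulr_lge0 ?invr_gt0 // subr_ge0.
apply: (le_trans (ler_norm c)).
rewrite /vnorm2 -sqrtrM // -sqrtr_sqr ler_sqrt ?mulr_ge0 //.
Qed.

Lemma vnorm2_triangle q (x y : 'cV[R]_q) : vnorm2 (x + y) <= vnorm2 x + vnorm2 y.
Proof.
have h0 : 0 <= vnorm2 x + vnorm2 y by rewrite addr_ge0 // vnorm2_ge0.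
rewrite -(ger0_norm h0) -sqrtr_sqr {1}/vnorm2 ler_sqrt ?sqr_ge0 //.
rewrite sqrrD !vnorm2_sq.
have -> : \sum_(i < q) (x + y) i 0 ^+ 2 =
   \sum_(i < q) x i 0 ^+ 2 + 2 * \sum_(i < q) x i 0 * y i 0 + \sum_(i < q) y i 0 ^+ 2.
  rewrite mulr_sumr -!big_split /=; apply: eq_bigr => i _; rewrite !mxE; ring.
rewrite mulr2n. have := cauchy_schwarz x y. lra.
Qed.

Lemma vnorm2Z q (a : R) (x : 'cV[R]_q) : vnorm2 (a *: x) = `|a| * vnorm2 x.
Proof.
rewrite /vnorm2 -sqrtr_sqr -sqrtrM ?sqr_ge0 // mulr_sumr.
by congr Num.sqrt; apply: eq_bigr => i _; rewrite !mxE exprMn.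
Qed.

Lemma vnorm2_0 q : vnorm2 (0 : 'cV[R]_q) = 0.
Proof. by rewrite /vnorm2 big1 ?sqrtr0 // => i _; rewrite mxE expr0n. Qed.

Lemma vnorm2_eq0 q (x : 'cV[R]_q) : vnorm2 x = 0 -> x = 0.
Proof.
move=> h; apply/matrixP => i j; rewrite (ord1 j) mxE.
by apply/eqP; rewrite -normr_le0 -h entry_le_vnorm2.
Qed.

Definition S1 {p q} (A : 'M[R]_(p, q)) := \sum_i \sum_j `|A i j|.

Lemma S1_ge0 p q (A : 'M[R]_(p, q)) : 0 <= S1 A.
Proof. by apply: sumr_ge0 => i _; apply: sumr_ge0. Qed.

Lemma mulmx_bound p q (A : 'M[R]_(p, q)) x : vnorm2 x <= 1 ->
  vnorm2 (A *m x) <= S1 A.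
Proof.
move=> hx; apply: (le_trans (vnorm2_le_sum _)); apply: ler_sum => i _.
rewrite mxE; apply: (le_trans (ler_norm_sum _ _ _)); apply: ler_sum => j _.
rewrite normrM ler_piMr //; apply: le_trans (entry_le_vnorm2 _ _) hx.
Qed.

Definition SN {p q} (A : 'M[R]_(p, q)) :=
  [set vnorm2 (A *m x) | x in [set x : 'cV[R]_q | vnorm2 x <= 1]].

Lemma SN_sup p q (A : 'M[R]_(p, q)) : has_sup (SN A).
Proof.
split; first by exists (vnorm2 (A *m 0)), 0 => //=; rewrite vnorm2_0 ler01.
by exists (S1 A) => _ [x hx <-]; exact: mulmx_bound.
Qed.

Lemma specnorm_ub p q (A : 'M[R]_(p, q)) x : vnorm2 x <= 1 ->
  vnorm2 (A *m x) <= specnorm A.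
Proof. by move=> hx; apply: (sup_upper_bound (SN_sup A)); exists x. Qed.

Lemma specnorm_le p q (A : 'M[R]_(p, q)) c :
  (forall x, vnorm2 x <= 1 -> vnorm2 (A *m x) <= c) -> specnorm A <= c.
Proof.
move=> h; apply: ge_sup; first by case: (SN_sup A).
by move=> _ [x hx <-]; exact: h.
Qed.

Lemma specnorm_ge0 p q (A : 'M[R]_(p, q)) : 0 <= specnorm A.
Proof.
apply: le_trans (specnorm_ub A (x := 0) _); first exact: vnorm2_ge0.
by rewrite vnorm2_0 ler01.
Qed.

Lemma specnorm_S1 p q (A : 'M[R]_(p, q)) : specnorm A <= S1 A.
Proof. by apply: specnorm_le => x; exact: mulmx_bound. Qed.

Lemma specnorm_mul p q (A : 'M[R]_(p, q)) x :
  vnorm2 (A *m x) <= specnorm A * vnorm2 x.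
Proof.
have [x0|xn0] := eqVneq (vnorm2 x) 0.
  have -> : A *m x = 0 by rewrite (vnorm2_eq0 x0) mulmx0.
  by rewrite vnorm2_0 x0 mulr0.
have xp : 0 < vnorm2 x by rewrite lt_def xn0 vnorm2_ge0.
have := specnorm_ub A (x := (vnorm2 x)^-1 *: x).
rewrite vnorm2Z ger0_norm ?invr_ge0 ?vnorm2_ge0 // mulVf // lexx => /(_ isT).
rewrite -scalemxAr vnorm2Z ger0_norm ?invr_ge0 ?vnorm2_ge0 //.
by rewrite ler_pdivrMl // mulrC.
Qed.

Lemma specnormM p q r (A : 'M[R]_(p, q)) (B : 'M[R]_(q, r)) :
  specnorm (A *m B) <= specnorm A * specnorm B.
Proof.
apply: specnorm_le => x hx; rewrite -mulmxA.
apply: (le_trans (specnorm_mul _ _)); apply: ler_wpM2l; first exact: specnorm_ge0.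
apply: (le_trans (specnorm_mul _ _)).
by rewrite -[leRHS]mulr1 ler_wpM2l // specnorm_ge0.
Qed.

Lemma specnormD p q (A B : 'M[R]_(p, q)) :
  specnorm (A + B) <= specnorm A + specnorm B.
Proof.
apply: specnorm_le => x hx; rewrite mulmxDl.
by apply: (le_trans (vnorm2_triangle _ _)); apply: lerD; exact: specnorm_ub.
Qed.

Lemma entry_le_specnorm p q (A : 'M[R]_(p, q)) i j : `|A i j| <= specnorm A.
Proof.
pose e : 'cV[R]_q := \col_k (k == j)%:R.
have he : vnorm2 e = 1.
  rewrite /vnorm2 (bigD1 j) //= big1 ?addr0 ?mxE ?eqxx ?expr1n ?sqrtr1 //.
  by move=> k /negbTE kj; rewrite mxE kj expr0n.
have := specnorm_ub A (x := e); rewrite he lexx => /(_ isT).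
apply: le_trans; apply: le_trans (entry_le_vnorm2 _ i).
rewrite mxE (bigD1 j) //= big1 ?addr0 ?mxE ?eqxx ?mulr1 //.
by move=> k /negbTE kj; rewrite mxE kj mulr0.
Qed.

Lemma S1_le_specnorm p q (A : 'M[R]_(p, q)) : S1 A <= (p * q)%:R * specnorm A.
Proof.
rewrite /S1 natrM -mulrA.
apply: (@le_trans _ _ (\sum_(i < p) \sum_(j < q) specnorm A)).
  by apply: ler_sum => i _; apply: ler_sum => j _; exact: entry_le_specnorm.
by rewrite sumr_const card_ord sumr_const card_ord -[_ *+ q]mulr_natl -[_ *+ p]mulr_natl.
Qed.

End Norms.
Section Blocks.
Variables (R : realType) (ns m : nat).

Lemma pb_step (G : nat -> 'M[R]_m) q t : (q <= t)%N ->
  prod_between G q.+1 t.+1 = G t.+1 *m prod_between G q.+1 t.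
Proof.
move=> qt; rewrite /prod_between ltnS ltnNge qt /=.
move: qt; rewrite leq_eqVlt => /orP[/eqP->|qlt].
  by rewrite ltnSn subnn /= mulmx1.
rewrite ltnS leqNgt qlt /= subSS.
have -> : (t - q = (t - q.+1).+1)%N by rewrite subnSK.
by rewrite /= addnS subnKC.
Qed.

Lemma lprod_block (F : nat -> 'M[R]_(ns + m)) s k :
  (forall t, ulsubmx (F t) = 1%:M /\ ursubmx (F t) = 0) ->
  lprod F s k = block_mx 1%:M 0
    (\sum_(s <= q < (s + k).+1)
        prod_between (fun t => drsubmx (F t)) q.+1 (s + k) *m dlsubmx (F q))
    (lprod (fun t => drsubmx (F t)) s k).
Proof.
move=> hF.
have Fb : forall t, F t = block_mx 1%:M 0 (dlsubmx (F t)) (drsubmx (F t)).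
  by move=> t; case: (hF t) => <- <-; rewrite submxK.
elim: k => [|k IH].
  rewrite addn0 big_nat1 /prod_between ltnSn mul1mx /=; exact: Fb.
rewrite /= IH {1}Fb mulmx_block !mul1mx !mul0mx !mulmx0 !addr0 add0r mulmx1.
congr block_mx; rewrite !addnS [RHS]big_nat_recr //= ?leqW ?leq_addr // [RHS]addrC.
congr (_ + _); first by rewrite /prod_between ltnSn mul1mx.
rewrite mulmx_sumr; apply: eq_big_nat => q /andP[_ qk].
by rewrite pb_step // mulmxA.
Qed.

Lemma rs_mul n (A B : 'M[R]_n) :
  row_stochastic A -> row_stochastic B -> row_stochastic (A *m B).
Proof.
move=> [A0 A1] [B0 B1]; split.
  by move=> i j; rewrite mxE; apply: sumr_ge0 => k _; exact: mulr_ge0.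
move=> i; under eq_bigr do rewrite mxE.
rewrite exchange_big /= -(A1 i); apply: eq_bigr => k _.
by rewrite -mulr_sumr B1 mulr1.
Qed.

Lemma rs_lprod (F : nat -> 'M[R]_(ns + m)) s k :
  (forall t, row_stochastic (F t)) -> row_stochastic (lprod F s k).
Proof. by move=> h; elim: k => [|k IH] //=; exact: rs_mul. Qed.

Lemma rs_entry n (A : 'M[R]_n) i j : row_stochastic A -> 0 <= A i j <= 1.
Proof.
move=> [A0 A1]; rewrite A0 /= -(A1 i) (bigD1 j) //= lerDl.
by apply: sumr_ge0 => k _.
Qed.

Lemma S1_block0 (M : 'M[R]_m) :
  S1 (block_mx (0 : 'M[R]_(ns, ns)) (0 : 'M[R]_(ns, m)) (0 : 'M[R]_(m, ns)) M)
  = S1 M.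
Proof.
rewrite /S1 big_split_ord /= big1 ?add0r.
  apply: eq_bigr => i _; rewrite big_split_ord /= big1 ?add0r.
    by apply: eq_bigr => j _; rewrite block_mxEdr.
  by move=> j _; rewrite block_mxEdl mxE normr0.
move=> i _; rewrite big_split_ord /= !big1 ?addr0 //.
  by move=> j _; rewrite block_mxEur mxE normr0.
by move=> j _; rewrite block_mxEul mxE normr0.
Qed.

End Blocks.
Section Cells.
Variables (R : realType) (K : nat).
Let N : R := K.+1%:R.
Let Np : 0 < N. Proof. by rewrite /N ltr0Sn. Qed.

Definition Icell (k : 'I_K.+1) : set R :=
  [set` (if (k == 0 :> nat) then `]-oo, (k.+1%:R / K.+1%:R : R)]
         else `](k%:R / K.+1%:R : R), k.+1%:R / K.+1%:R])%R].

Lemma Icell_meas k : measurable (Icell k).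
Proof. exact: measurable_itv. Qed.

Lemma IcellP k x : Icell k x <->
  (((k == 0 :> nat) || (k%:R / N < x)) && (x <= k.+1%:R / N)).
Proof.
rewrite /Icell /=; case: (k == 0 :> nat) => /=; rewrite in_itv //=.
Qed.

Lemma Icell_uniq k k' x : Icell k x -> Icell k' x -> k = k'.
Proof.
have key : forall a b : 'I_K.+1, (a < b)%N -> Icell a x -> Icell b x -> False.
  move=> a b ab /IcellP /andP[_ xa] /IcellP /andP[hb _].
  have b0 : (b == 0 :> nat) = false by apply/negbTE; rewrite -lt0n (leq_ltn_trans _ ab).
  rewrite b0 /= in hb.
  have hab : a.+1%:R / N <= b%:R / N by rewrite ler_pM2r ?invr_gt0 // ler_nat.
  by move: (lt_le_trans (le_lt_trans hab hb) xa); rewrite ltxx.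
move=> hk hk'; apply/val_inj => /=; case: (ltngtP k k') => // h.
  by case: (key _ _ h hk hk').
by case: (key _ _ h hk' hk).
Qed.

Lemma Icell_ex x : 0 <= x -> x <= 1 -> exists k, Icell k x.
Proof.
move=> x0 x1.
suff : forall j, (j <= K)%N -> x <= j.+1%:R / N -> exists k, Icell k x.
  move=> H; apply: (H K) => //; rewrite /N divff // pnatr_eq0.
elim=> [_ h|j IH jK h].
  by exists ord0; apply/IcellP; rewrite eqxx.
have [le|gt] := lerP x (j.+1%:R / N).
  by apply: IH => //; exact: ltnW.
exists (inord j.+1); apply/IcellP; rewrite inordK ?ltnS //.
by rewrite gt h orbT.
Qed.

Definition cellof (x : R) : 'I_K.+1 :=
  if [pick k : 'I_K.+1 | `[< Icell k x >] ] is Some k then k else ord0.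

Lemma cellofP x : 0 <= x -> x <= 1 -> Icell (cellof x) x.
Proof.
move=> x0 x1; rewrite /cellof; case: pickP => [k /asboolP //|none].
by case: (Icell_ex x0 x1) => k hk; move: (none k); rewrite asboolT.
Qed.

Lemma Icell_close k x : Icell k x -> 0 <= x -> `|x - k%:R / N| <= N^-1.
Proof.
move=> /IcellP /andP[h1 h2] x0.
have e : k.+1%:R / N = k%:R / N + N^-1 by rewrite -nat1r mulrDl mul1r addrC.
rewrite e in h2.
case/orP: h1 => [/eqP k0|h1].
  rewrite k0 mul0r subr0 ger0_norm //; move: h2; rewrite k0 mul0r add0r //.
rewrite ger0_norm; last by rewrite subr_ge0 ltW.
by rewrite lerBlDl.
Qed.

Definition Lmat m (kap : {ffun 'I_m * 'I_m -> 'I_K.+1}) : 'M[R]_m :=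
  \matrix_(i, j) ((kap (i, j))%:R / N).

Lemma Lmat_ge0 m kap i j : 0 <= @Lmat m kap i j.
Proof. by rewrite mxE divr_ge0 // ltW. Qed.

Lemma cell_S1 m (kap : {ffun 'I_m * 'I_m -> 'I_K.+1}) (Dm : 'M[R]_m) :
  (forall i j, 0 <= Dm i j) -> (forall i j, Icell (kap (i, j)) (Dm i j)) ->
  S1 (Dm - Lmat kap) <= (m * m)%:R / N.
Proof.
move=> D0 DI.
apply: (@le_trans _ _ (\sum_(i < m) \sum_(j < m) N^-1)).
  apply: ler_sum => i _; apply: ler_sum => j _; rewrite !mxE.
  exact: Icell_close.
by rewrite sumr_const card_ord sumr_const card_ord -mulrnA mulr_natl.
Qed.

Lemma cell_up m (kap : {ffun 'I_m * 'I_m -> 'I_K.+1}) (Dm : 'M[R]_m) :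
  (forall i j, 0 <= Dm i j) -> (forall i j, Icell (kap (i, j)) (Dm i j)) ->
  specnorm Dm <= specnorm (Lmat kap) + (m * m)%:R / N.
Proof.
move=> D0 DI; have -> : Dm = Lmat kap + (Dm - Lmat kap) by rewrite addrC subrK.
apply: (le_trans (specnormD _ _)); rewrite lerD2l.
apply: (le_trans (specnorm_S1 _)).
exact: cell_S1.
Qed.

Lemma cell_lo m (kap : {ffun 'I_m * 'I_m -> 'I_K.+1}) (Dm : 'M[R]_m) :
  (forall i j, 0 <= Dm i j) -> (forall i j, Icell (kap (i, j)) (Dm i j)) ->
  specnorm (Lmat kap) <= specnorm Dm + (m * m)%:R / N.
Proof.
move=> D0 DI; have -> : Lmat kap = Dm + (Lmat kap - Dm) by rewrite addrC subrK.
apply: (le_trans (specnormD _ _)); rewrite lerD2l.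
apply: (le_trans (specnorm_S1 _)).
apply: le_trans (cell_S1 D0 DI); rewrite /S1 le_eqVlt; apply/orP; left; apply/eqP.
by apply: eq_bigr => i _; apply: eq_bigr => j _; rewrite !mxE -normrN opprB.
Qed.

End Cells.
Section Prob.
Variables (R : realType) (d : measure_display) (T : measurableType d)
  (P : probability T R) (ns m K : nat) (W : nat -> T -> 'M[R]_(ns + m)).
Hypothesis iidW : iid_mx P W.
Hypothesis rsW : forall t w, row_stochastic (W t w).

Local Notation C := {ffun 'I_m * 'I_m -> 'I_K.+1}.

Definition Dm t w : 'M[R]_m := drsubmx (W t w).

Lemma Dm_entry t w i j : 0 <= Dm t w i j <= 1.
Proof. by rewrite /Dm !mxE; exact: rs_entry. Qed.

Definition Ev t (kap : C) : set T :=
  [set w | forall i j, Icell (kap (i, j)) (Dm t w i j)].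

Definition Aof (kap : C) : 'I_(ns + m) -> 'I_(ns + m) -> set R := fun i j =>
  match fintype.split i, fintype.split j with
  | inr i', inr j' => Icell (kap (i', j'))
  | _, _ => setT
  end.

Lemma Aof_meas kap i j : measurable (Aof kap i j).
Proof.
rewrite /Aof; case: (fintype.split i) => a; case: (fintype.split j) => b //; exact: Icell_meas.
Qed.

Lemma Ev_mx t kap : Ev t kap = mx_event (W t) (Aof kap).
Proof.
apply/seteqP; split => w /= h.
- move=> i j; rewrite -(splitK i) -(splitK j).
  case: (fintype.split i) => i'; case: (fintype.split j) => j';
    rewrite /Aof !unsplitK //.
  by have := h i' j'; rewrite /Dm !mxE.
- move=> i j; have := h (rshift ns i) (rshift ns j).
  rewrite /Aof /Dm mxE.
  have e : forall k : 'I_m, fintype.split (rshift ns k) = inr k.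
    by move=> k; exact: (unsplitK (inr _ k)).
  by rewrite !e !mxE.
Qed.

Lemma meas_forall (I : finType) (S : I -> set T) :
  (forall i, measurable (S i)) -> measurable [set w | forall i, S i w].
Proof.
move=> mS.
have -> : [set w | forall i, S i w] = \bigcap_(i in [set: I]) S i.
  by apply/seteqP; split => w /= h i //; apply: h.
by apply: fin_bigcap_measurable => //; exact: finite_finset.
Qed.

Lemma mx_event_meas t A : (forall i j, measurable (A i j)) ->
  measurable (mx_event (W t) A).
Proof.
case: iidW => mW _ _ mA.
apply: (meas_forall (S := fun i => [set w | forall j, A i j (W t w i j)])) => i.
apply: (meas_forall (S := fun j => [set w | A i j (W t w i j)])) => j.
rewrite -[X in measurable X]setTI; exact: mW.
Qed.

Lemma Ev_meas t kap : measurable (Ev t kap).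
Proof. by rewrite Ev_mx; apply: mx_event_meas => i j; exact: Aof_meas. Qed.

Lemma P_fin (A : set T) : measurable A -> P A \is a fin_num.
Proof.
move=> mA; rewrite ge0_fin_numE ?measure_ge0 //.
by apply: (le_lt_trans (probability_le1 P mA)); exact: ltey.
Qed.

Definition pr t kap := fine (P (Ev t kap)).

Lemma P_Ev t kap : P (Ev t kap) = (pr t kap)%:E.
Proof. by rewrite /pr fineK // (P_fin (Ev_meas t kap)). Qed.

Lemma pr_ge0 t kap : 0 <= pr t kap.
Proof. by rewrite /pr fine_ge0 // measure_ge0. Qed.

Definition kw t w : C := [ffun ij => cellof K (Dm t w ij.1 ij.2)].

Lemma kwP t w i j : Icell (kw t w (i, j)) (Dm t w i j).
Proof.
rewrite ffunE /=; have /andP[h0 h1] := Dm_entry t w i j; exact: cellofP.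
Qed.

Lemma Ev_kw t kap w : Ev t kap w <-> kap = kw t w.
Proof.
split => [h|->]; last by move=> i j; exact: kwP.
by apply/ffunP => -[i j]; apply: (Icell_uniq (h i j)); exact: kwP.
Qed.

Lemma sum_indic (f : C -> R) t w :
  \sum_kap f kap * \1_(Ev t kap) w = f (kw t w).
Proof.
rewrite (bigD1 (kw t w)) //= big1 ?addr0.
  by rewrite indicE mem_set ?mulr1 //; apply/Ev_kw.
move=> kap /negbTE ne; rewrite indicE memNset ?mulr0 // => /Ev_kw e.
by rewrite e eqxx in ne.
Qed.

Lemma int_simple (I : finType) (c : I -> R) (A : I -> set T) :
  (forall i, 0 <= c i) -> (forall i, measurable (A i)) ->
  (\int[P]_w (\sum_i c i * \1_(A i) w)%:E = (\sum_i c i * fine (P (A i)))%:E)%E.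
Proof.
move=> c0 mA.
under eq_integral do rewrite -sumEFin.
rewrite ge0_integral_sum //; first last.
- by move=> i w _; rewrite lee_fin mulr_ge0 // indicE.
- move=> i; apply/measurable_realfun.measurable_EFinP; apply: measurable_realfun.measurable_funM.
    exact: measurable_cst.
  exact: measurable_realfun.measurable_indic.
rewrite -sumEFin; apply: eq_bigr => i _.
under eq_integral do rewrite EFinM.
have i0 : forall w, setT w -> (0 <= (\1_(A i) w : R)%:E)%E.
  by move=> w _; rewrite lee_fin indicE.
rewrite (ge0_integralZl_EFin P measurableT i0 _ (c0 i)); last first.
  by apply/measurable_realfun.measurable_EFinP; exact: measurable_realfun.measurable_indic.
by rewrite integral_indic // setIT EFinM fineK // P_fin.
Qed.

Lemma int_mono (f g : T -> \bar R) : (forall x, 0 <= f x)%E ->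
  (forall x, f x <= g x)%E -> (\int[P]_x f x <= \int[P]_x g x)%E.
Proof.
move=> f0 fg; rewrite !ge0_integralE //; last first.
  by move=> x _; exact: le_trans (f0 x) (fg x).
apply: ereal_sup_le => _ [h hh <-]; exists h => //= x.
apply: le_trans (hh x) _; rewrite !patch_setT; exact: fg.
Qed.

Lemma sum_pr t : \sum_kap pr t kap = 1.
Proof.
have := @int_simple _ (fun _ : C => 1) (Ev t) (fun _ => ler01) (Ev_meas t).
under eq_integral do rewrite (sum_indic (fun _ => 1)).
rewrite integral_cst // mul1e.
move=> h.
have h2 : ((\sum_kap 1 * fine (P (Ev t kap)))%:E = 1%:E)%E.
  by rewrite -h; exact: probability_setT.
move: h2 => /eqP; rewrite eqe => /eqP <-.
by apply: eq_bigr => kap _; rewrite mul1r.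
Qed.

Definition g (u : C -> R) t w := u (kw t w).

Lemma g_meas u t : measurable_fun setT (g u t).
Proof.
have -> : g u t = fun w => \sum_kap u kap * \1_(Ev t kap) w.
  by apply/funext => w; rewrite sum_indic.
apply: measurable_sum => kap; apply: measurable_realfun.measurable_funM.
  exact: measurable_cst.
exact/measurable_realfun.measurable_indic/Ev_meas.
Qed.

Definition Fs s k (phi : {ffun 'I_k.+1 -> C}) : set T :=
  [set w | forall j : 'I_k.+1, Ev (s + j) (phi j) w].

Lemma Fs_meas s k phi : measurable (Fs (k:=k) s phi).
Proof. by apply: meas_forall => j; exact: Ev_meas. Qed.

Lemma P_Fs s k phi : P (Fs (k:=k) s phi) = (\prod_(j < k.+1) pr (s + j) (phi j))%:E.
Proof.
case: iidW => _ hind _.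
pose A t := Aof (phi (inord (t - s))).
have := hind (iota s k.+1) A (iota_uniq _ _) (fun t i j => Aof_meas _ _ _).
have -> : [set w | forall t, t \in iota s k.+1 -> mx_event (W t) (A t) w]
          = Fs (k:=k) s phi.
  apply/seteqP; split => w h.
  - move=> j; have := h (s + j)%N; rewrite mem_iota leq_addr ltn_add2l ltn_ord.
    by move=> /(_ isT); rewrite /A addKn inord_val -Ev_mx.
  - move=> t; rewrite mem_iota => /andP[st tl].
    have tk : (t - s < k.+1)%N by lia.
    have := h (inord (t - s)); rewrite Ev_mx /A inordK // subnKC //.
move=> ->.
have -> : iota s k.+1 = map (addn s) (iota 0 k.+1) by rewrite -iotaDl addn0.
rewrite big_map -prodEFin.
rewrite -[iota 0 k.+1]/(index_iota 0 k.+1) big_mkord.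
apply: eq_bigr => j _; by rewrite /A addKn inord_val -Ev_mx P_Ev.
Qed.

Definition G u s k w := \prod_(j < k.+1) g u (s + j) w.

Lemma G_sum u s k w : G u s k w =
  \sum_(phi : {ffun 'I_k.+1 -> C}) (\prod_j u (phi j)) * \1_(Fs s phi) w.
Proof.
rewrite (bigD1 [ffun j : 'I_k.+1 => kw (s + j) w]) //= [X in _ + X]big1 ?addr0.
  rewrite indicE mem_set ?mulr1.
    by apply: eq_bigr => j _; rewrite ffunE.
  by move=> j; rewrite ffunE; apply/Ev_kw.
move=> phi /negbTE ne; rewrite indicE memNset ?mulr0 // => h.
suff e : phi = [ffun j : 'I_k.+1 => kw (s + j) w] by rewrite e eqxx in ne.
by apply/ffunP => j; rewrite ffunE; apply/Ev_kw; exact: h j.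
Qed.

Lemma G_meas u s k : measurable_fun setT (G u s k).
Proof. by apply: measurable_prod => j _; exact: g_meas. Qed.

Lemma int_G u s k : (forall kap, 0 <= u kap) ->
  (\int[P]_w (G u s k w)%:E =
   (\prod_(j < k.+1) \sum_kap u kap * pr (s + j) kap)%:E)%E.
Proof.
move=> u0; under eq_integral do rewrite G_sum.
rewrite int_simple //; first last.
- by move=> phi; exact: Fs_meas.
- by move=> phi; apply: prodr_ge0 => j _.
congr EFin; rewrite bigA_distr_bigA /=; apply: eq_bigr => phi _.
by rewrite P_Fs /= -big_split.
Qed.


Definition delta : R := (m * m)%:R / K.+1%:R.
Definition u0 (kap : C) := specnorm (Lmat R kap) + delta.
Definition l0 (kap : C) := Num.max 0 (specnorm (Lmat R kap) - delta).

Lemma delta_ge0 : 0 <= delta.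
Proof. by rewrite /delta divr_ge0. Qed.

Lemma u0_ge0 kap : 0 <= u0 kap.
Proof. by rewrite /u0 addr_ge0 ?specnorm_ge0 ?delta_ge0. Qed.

Lemma l0_ge0 kap : 0 <= l0 kap.
Proof. by rewrite /l0 le_max lexx. Qed.

Lemma Dm_ge0 t w i j : 0 <= Dm t w i j.
Proof. by have /andP[] := Dm_entry t w i j. Qed.

Lemma X_le_g t w : specnorm (Dm t w) <= g u0 t w.
Proof. by apply: cell_up => i j; [exact: Dm_ge0 | exact: kwP]. Qed.

Lemma l_le_X t w : l0 (kw t w) <= specnorm (Dm t w).
Proof.
rewrite /l0 ge_max specnorm_ge0 /= lerBlDr.
by apply: cell_lo => i j; [exact: Dm_ge0 | exact: kwP].
Qed.

Lemma g_ge0 t w : 0 <= g u0 t w.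
Proof. exact: u0_ge0. Qed.

Lemma G_ge0 s k w : 0 <= G u0 s k w.
Proof. by apply: prodr_ge0 => j _; exact: g_ge0. Qed.

Lemma a_ge0 t : 0 <= \sum_kap u0 kap * pr t kap.
Proof. by apply: sumr_ge0 => kap _; rewrite mulr_ge0 ?u0_ge0 ?pr_ge0. Qed.

Lemma a_le t c : ('E_P[fun w => specnorm (Dm t w)] = c%:E)%E ->
  \sum_kap u0 kap * pr t kap <= c + 2 * delta.
Proof.
move=> hE.
have hl : \sum_kap l0 kap * pr t kap <= c.
  have := @int_simple _ l0 (Ev t) l0_ge0 (Ev_meas t).
  under eq_integral do rewrite (sum_indic l0).
  move=> h; rewrite -lee_fin /pr -h -hE unlock.
  apply: int_mono => x; rewrite lee_fin ?l0_ge0 //; exact: l_le_X.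
have key : forall kap, u0 kap <= l0 kap + 2 * delta.
  move=> kap; rewrite /u0 /l0.
  have : specnorm (Lmat R kap) - delta <= Num.max 0 (specnorm (Lmat R kap) - delta).
    by rewrite le_max lexx orbT.
  lra.
apply: (@le_trans _ _ (\sum_kap (l0 kap + 2 * delta) * pr t kap)).
  by apply: ler_sum => kap _; apply: ler_wpM2r; [exact: pr_ge0 | exact: key].
under eq_bigr do rewrite mulrDl.
by rewrite big_split /= -mulr_sumr sum_pr mulr1 lerD2r.
Qed.

Lemma int_G_le s k (c' : R) : (forall t, \sum_kap u0 kap * pr t kap <= c') ->
  (\int[P]_w (G u0 s k w)%:E <= (c' ^+ k.+1)%:E)%E.
Proof.
move=> hc; rewrite int_G; last exact: u0_ge0.
rewrite lee_fin.
apply: (@le_trans _ _ (\prod_(j < k.+1) c')).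
  by apply: ler_prod => j _; rewrite a_ge0 hc.
by rewrite prodr_const card_ord.
Qed.

Lemma geo_fin (c' : R) : 0 < c' -> c' < 1 -> (\sum_(k <oo) (c' ^+ k.+1)%:E < +oo)%E.
Proof.
move=> c0 c1.
apply: (@le_lt_trans _ _ (c' * (1 - c')^-1)%:E); last exact: ltey.
apply: lime_le; first by apply: is_cvg_nneseries => n _ _; rewrite lee_fin exprn_ge0 // ltW.
apply: nearW => n; rewrite sumEFin lee_fin.
have c1' : `|c'| < 1 by rewrite ger0_norm // ltW.
have := geometric_le_lim n (ltW c0) c0 c1'.
apply: le_trans; rewrite /series /=.
by under eq_bigr do rewrite exprS.
Qed.

Definition Z s w := (\sum_(k <oo) (G u0 s k w)%:E)%E.

Lemma Z_fin s (c' : R) : 0 < c' -> c' < 1 ->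
  (forall t, \sum_kap u0 kap * pr t kap <= c') ->
  {ae P, forall w, (Z s w < +oo)%E}.
Proof.
move=> c0 c1 hc.
have Z0 : forall w, (0 <= Z s w)%E.
  by move=> w; apply: nneseries_ge0 => n _ _; rewrite lee_fin G_ge0.
have iZ : P.-integrable setT (Z s).
  apply/integrableP; split.
    apply: ge0_emeasurable_sum => k; first by move=> x _ _; rewrite lee_fin G_ge0.
    by move=> _; apply/measurable_realfun.measurable_EFinP; exact: G_meas.
  under eq_integral do rewrite gee0_abs ?Z0 //.
  rewrite /Z integral_nneseries //; first last.
  - by move=> n x _; rewrite lee_fin G_ge0.
  - by move=> n; apply/measurable_realfun.measurable_EFinP; exact: G_meas.
  apply: le_lt_trans (geo_fin c0 c1).
  apply: lee_nneseries => [k _ _|k _]; last exact: int_G_le.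
  by apply: integral_ge0 => x _; rewrite lee_fin G_ge0.
have := integrable_ae measurableT iZ.
apply: filterS => w /(_ I) h; rewrite -ge0_fin_numE //.
Qed.

Lemma G_cvg0 s w : (Z s w < +oo)%E -> (fun k => G u0 s k w) @ \oo --> 0.
Proof.
move=> hZ.
have tail := nneseries_tail_cvg hZ (fun k _ => G_ge0 s k w : (0 <= (G u0 s k w)%:E)%E).
have h : (fun k => (G u0 s k w)%:E) @ \oo --> 0%E.
  apply: (@squeeze_cvge _ _ _ _ (fun _ => 0%E) _
     (fun N => \sum_(N <= k <oo) (G u0 s k w)%:E)%E); last exact: tail.
    apply: nearW => N; rewrite lee_fin G_ge0 /=.
    have := @nneseries_lim_ge R (fun k => (G u0 s k w)%:E) xpredT N N.+1.
    by rewrite big_nat1; apply => n _ _; rewrite lee_fin G_ge0.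
  exact: cvg_cst.
by move/fine_cvgP : h => [_ h].
Qed.

End Prob.
Lemma lprod_le (R : realType) (m : nat) (F : nat -> 'M[R]_m) s k :
  specnorm (lprod F s k) <= \prod_(j < k.+1) specnorm (F (s + j)%N).
Proof.
elim: k => [|k IH]; first by rewrite big_ord1 addn0.
rewrite big_ord_recr /= mulrC.
apply: (le_trans (specnormM _ _)); apply: ler_wpM2l; first exact: specnorm_ge0.
exact: IH.
Qed.

Unset Implicit Arguments.

Theorem lemma2 (R : realType) (d : measure_display) (T : measurableType d)
  (P : probability T R) (ns m : nat)
  (W : nat -> T -> 'M[R]_(ns + m)) (Wbar : 'M[R]_(ns + m)) :
  (0 < ns)%N -> (0 < m)%N ->
  iid_mx P W ->
  (forall t w, row_stochastic (W t w)) ->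
  (forall t w, ulsubmx (W t w) = 1%:M /\ ursubmx (W t w) = 0) ->
  (forall t i j, ('E_P[fun w => W t w i j] = (Wbar i j)%:E)%E) ->
  specnorm (drsubmx Wbar) < 1 ->
  (forall t, ('E_P[fun w => specnorm (drsubmx (W t w))]
              = (specnorm (drsubmx Wbar))%:E)%E) ->
  let B := fun t w => dlsubmx (W t w) in
  let D := fun t w => drsubmx (W t w) in
  let Phi := fun w s t => prod_between (fun k => W k w) s t in
  let Bst := fun w s t =>
    \sum_(s <= q < t.+1) prod_between (fun k => D k w) q.+1 t *m B q w in
  {ae P, forall w,
    forall s : nat,
      [/\ (fun k : nat => specnorm (lprod (fun k => D k w) s k)) @ \oo --> 0,
          (fun k : nat => specnorm (Phi w s (s + k)%N
                          - block_mx 1%:M 0 (Bst w s (s + k)%N) 0)) @ \oo --> 0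
        & exists M : R, forall t : nat, (s <= t)%N -> specnorm (Bst w s t) <= M]}.
Proof.
move=> ns0 m0 iidW rsW blk _ cl1 hE B D Phi Bst.
set c := specnorm (drsubmx Wbar).
have c0 : 0 <= c := specnorm_ge0 _.
have c1 : 0 < 1 - c by rewrite subr_gt0.
have hx : 0 <= 2 * (m * m)%:R / (1 - c) by rewrite divr_ge0 // ltW.
pose K := Num.Def.archi_bound (2 * (m * m)%:R / (1 - c)).
have hK := archi_boundP hx; rewrite -/K in hK.
have Kp : (0 : R) < K.+1%:R by rewrite ltr0Sn.
have mm0 : (0 : R) < (m * m)%:R by rewrite ltr0n muln_gt0 m0.
have dpos : 0 < delta R m K by rewrite /delta divr_gt0.
have hd : c + 2 * delta R m K < 1.
  have h1 : 2 * (m * m)%:R < K%:R * (1 - c) by rewrite -ltr_pdivrMr.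
  have h2 : (K%:R : R) <= K.+1%:R by rewrite ler_nat.
  have h3 : 2 * (m * m)%:R < K.+1%:R * (1 - c).
    by apply: (lt_le_trans h1); rewrite ler_wpM2r // ltW.
  have h4 : 2 * delta R m K < 1 - c.
    by rewrite /delta mulrA ltr_pdivrMr // [X in _ < X]mulrC.
  lra.
have cp : 0 < c + 2 * delta R m K by rewrite ltr_pwDr // mulr_gt0.
have ha t : \sum_(kap : {ffun 'I_m * 'I_m -> 'I_K.+1}) u0 R kap * pr P W t kap
    <= c + 2 * delta R m K.
  exact: (a_le K iidW rsW (hE t)).
have hae := fun s => Z_fin iidW rsW s cp hd ha.
have hall := ae_foralln hae.
apply: filterS hall => w hw s.
have Gc := G_cvg0 (hw s).
have hl : forall k, specnorm (lprod (fun k => D k w) s k) <= G W (@u0 R m K) s k w.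
  move=> k; apply: (le_trans (lprod_le _ _ _)).
  apply: ler_prod => j _; rewrite specnorm_ge0 /=.
  exact: (X_le_g K rsW).
have F1 : (fun k : nat => specnorm (lprod (fun k => D k w) s k)) @ \oo --> 0.
  apply: (squeeze_cvgr (f := fun _ => 0) (h := fun k => G W (@u0 R m K) s k w)) => //.
    by apply: nearW => k; rewrite specnorm_ge0 hl.
  exact: cvg_cst.
have blkw : forall t, ulsubmx (W t w) = 1%:M /\ ursubmx (W t w) = 0.
  by move=> t; exact: blk.
split => //.
- have eP : forall k, Phi w s (s + k)%N - block_mx 1%:M 0 (Bst w s (s + k)%N) 0
            = block_mx 0 0 0 (lprod (fun k => D k w) s k).
    move=> k; rewrite /Phi /prod_between ltnNge leq_addr /= addKn.
    rewrite (lprod_block s k blkw) opp_block_mx add_block_mx !subrr oppr0 addr0.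
    done.
  apply: (squeeze_cvgr (f := fun _ => 0)
     (h := fun k => (m * m)%:R * G W (@u0 R m K) s k w)).
  + apply: nearW => k; rewrite eP specnorm_ge0 /=.
    apply: (le_trans (specnorm_S1 _)); rewrite S1_block0.
    by apply: (le_trans (S1_le_specnorm _)); apply: ler_wpM2l => //.
  + exact: cvg_cst.
  + by have := cvgMl_tmp (a := (m * m)%:R : R) Gc; rewrite mulr0; apply; exact: eventually_filter.
- exists (m * ns)%:R => t st.
  have e := lprod_block s (t - s) blkw; rewrite subnKC // in e.
  have -> : Bst w s t = dlsubmx (lprod (fun k => W k w) s (t - s)).
    by rewrite e block_mxKdl.
  apply: (le_trans (specnorm_S1 _)).
  apply: (@le_trans _ _ (\sum_(i < m) \sum_(j < ns) (1 : R))).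
    apply: ler_sum => i _; apply: ler_sum => j _; rewrite !mxE.
    have /andP[h0 h1] := rs_entry (rshift ns i) (lshift m j)
      (rs_lprod s (t - s) (fun k => rsW k w)).
    by rewrite ger0_norm.
  by rewrite sumr_const card_ord sumr_const card_ord -mulrnA mulnC.
Qed.
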